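(* Let $f(x)=\frac1n\sum_{t=1}^n f_t(x)$ where each $f_t:\mathbb{R}^d\to\mathbb{R}$ is convex and continuously differentiable, and suppose there are positive semidefinite matrices $Q^1,\dots,Q^m$ such that for all $t\in[n]$, $j\in[m]$ and $x,y\in\mathbb{R}^d$, $\|\nabla^{(j)} f_t(x)-\nabla^{(j)} f_t(y)\|^2\le\|x-y\|^2_{Q^j}$. Then for all $j\in[m]$ and $x,y$, $\|\nabla^{(j)} f(x)-\nabla^{(j)} f(y)\|^2\le\|x-y\|^2_{Q^j}$; consequently, with $L^2=2\|\tilde Q\|$, $f$ satisfies for all $x,y$: $f(y)-f(x)\le\langle\nabla f(x),y-x\rangle+\frac L2\|y-x\|^2$ and $\|\nabla f(y)-\nabla f(x)\|^2\le 2L(f(y)-f(x)-\langle\nabla f(x),y-x\rangle)$.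
   Context: The coordinates $\{1,\dots,d\}$ are partitioned into $m$ consecutive blocks $\mathcal{S}^1,\dots,\mathcal{S}^m$; $\nabla^{(j)}$ denotes the block-$j$ part of a gradient. For a PSD matrix $Q$, $\|x\|_Q^2=x^\top Qx$. For a $d\times d$ matrix $Q$, $(Q)_{\ge j}$ is obtained by zeroing all rows and columns indexed by blocks $1,\dots,j-1$. $\tilde Q=\sum_{j=1}^m[(Q^j)_{\ge j}+(Q^j)_{\ge j+1}]$ and $L^2=2\|\tilde Q\|<\infty$ (operator norm). *)

(* Defs.v *)
From HB Require Import structures.
From mathcomp Require Import all_boot all_order all_algebra.
From mathcomp Require Import all_classical all_reals all_analysis.
Set Implicit Arguments. Unset Strict Implicit. Unset Printing Implicit Defensive.
Import Order.TTheory GRing.Theory Num.Theory.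
Import numFieldNormedType.Exports.
Local Open Scope classical_set_scope.
Local Open Scope ring_scope.

Definition dotv (R : realType) (d : nat) (u v : 'rV[R]_d) : R :=
  \sum_(i < d) u 0 i * v 0 i.
Definition sqnorm (R : realType) (d : nat) (v : 'rV[R]_d) : R := dotv v v.

Definition qnorm2 (R : realType) (d : nat) (Q : 'M[R]_d) (x : 'rV[R]_d) : R :=
  (x *m Q *m x^T) 0 0.

Definition psd (R : realType) (d : nat) (Q : 'M[R]_d) : Prop :=
  Q^T = Q /\ forall x : 'rV[R]_d, 0 <= qnorm2 Q x.

(* blk : 'I_d -> 'I_m assigns each coordinate its block; the blocks are
   consecutive (blk nondecreasing) and form a partition into m (nonempty)
   blocks (blk surjective). *)
Definition consecutive_blocks (d m : nat) (blk : 'I_d -> 'I_m) : Prop :=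
  (forall i k : 'I_d, (i <= k)%N -> (blk i <= blk k)%N) /\
  (forall j : 'I_m, exists i : 'I_d, blk i = j).

Definition blocksq (R : realType) (d m : nat) (blk : 'I_d -> 'I_m)
  (j : 'I_m) (v : 'rV[R]_d) : R :=
  \sum_(i < d | blk i == j) v 0 i ^+ 2.

Definition trunc_ge (R : realType) (d m : nat) (blk : 'I_d -> 'I_m)
  (j : nat) (Q : 'M[R]_d) : 'M[R]_d :=
  \matrix_(i, k) (if (j <= blk i)%N && (j <= blk k)%N then Q i k else 0).

Definition Qtilde (R : realType) (d m : nat) (blk : 'I_d -> 'I_m)
  (Q : 'I_m -> 'M[R]_d) : 'M[R]_d :=
  \sum_(j < m) (trunc_ge blk j (Q j) + trunc_ge blk j.+1 (Q j)).

Definition opnorm (R : realType) (d : nat) (A : 'M[R]_d) : R :=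
  sup [set y : R | exists x : 'rV[R]_d,
         sqnorm x <= 1 /\ y = Num.sqrt (sqnorm (x *m A^T))].

Definition grad (R : realType) (d : nat) (f : 'rV[R]_d -> R) (x : 'rV[R]_d)
  : 'rV[R]_d :=
  \row_(i < d) ('D_(delta_mx 0 i) f x).

Definition convex_fun (R : realType) (d : nat) (f : 'rV[R]_d -> R) : Prop :=
  forall (x y : 'rV[R]_d) (a : R), 0 <= a <= 1 ->
    f (a *: x + (1 - a) *: y) <= a * f x + (1 - a) * f y.

Definition C1 (R : realType) (d : nat) (f : 'rV[R]_d -> R) : Prop :=
  (forall x, differentiable f x) /\ continuous (grad f).

(* Main.v *)
Require Import Defs.
From HB Require Import structures.
From mathcomp Require Import all_boot all_order all_algebra.
From mathcomp Require Import all_classical all_reals all_analysis.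
From mathcomp Require Import ring lra.
Set Implicit Arguments. Unset Strict Implicit. Unset Printing Implicit Defensive.
Import Order.TTheory GRing.Theory Num.Theory.
Import numFieldNormedType.Exports.
Local Open Scope classical_set_scope.
Local Open Scope ring_scope.

Section S.
Variables (R : realType) (d : nat).
Implicit Types (f : 'rV[R]_d -> R) (x v p b : 'rV[R]_d).

Lemma Dgrad f x v : differentiable f x -> 'D_v f x = dotv (grad f x) v.
Proof.
move=> df; rewrite deriveE // {1}(row_sum_delta v) linear_sum /dotv.
apply: eq_bigr => i _; rewrite linearZ /= mxE deriveE // mulrC. done.
Qed.

Lemma phi_derive f p b (t : R) : (forall x, differentiable f x) ->
  is_derive t 1 (fun s : R => f (p + s *: b)) ('D_b f (p + t *: b)).
Proof.
move=> df.
have E : (fun h : R => h^-1 *: (((fun s : R => f (p + s *: b)) \o shift t) (h *: 1) - f (p + t *: b)))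
  = (fun h => h^-1 *: ((f \o shift (p + t *: b)) (h *: b) - f (p + t *: b))).
  apply/funext => h /=; congr (_ *: (f _ - _)).
  apply/rowP => i; rewrite !mxE /= -[h%:A]/(h * 1) mulr1; ring.
constructor; rewrite /derivable /derive; rewrite E //; exact: diff_derivable.
Qed.
End S.

Section S1.
Variables (R : realType).

Lemma poly_derive (k1 k2 t : R) :
  is_derive t 1 (fun s : R => k1 * s + k2 * (s * s)) (k1 + k2 * (2 * t)).
Proof.
have -> : (fun s : R => k1 * s + k2 * (s * s)) =
   (k1 \*: (id : R -> R)) + (k2 \*: ((id : R -> R) * id)).
  by apply/funext => s.
apply: is_derive_eq.
rewrite /= -[k1%:A]/(k1 * 1) -[t%:A]/(t * 1) -[k2 *: _]/(k2 * _); ring.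
Qed.

Lemma oneD (phi dphi : R -> R) (c S A B al : R) : 0 < al ->
  (forall t : R, is_derive t 1 phi (dphi t)) ->
  (forall t, 0 <= t <= 1 -> dphi t - c <= (al * S + (A + (B - A) * t) / al) / 2) ->
  phi 1 - phi 0 - c <= (al * S + (A + B) / (2 * al)) / 2.
Proof.
move=> al0 dph hb.
set k1 := c + al * S / 2 + A / (2 * al).
set k2 := (B - A) / (4 * al).
pose th := phi - (fun s : R => k1 * s + k2 * (s * s)).
have dth : forall t : R, is_derive t 1 th (dphi t - (k1 + k2 * (2 * t))).
  by move=> t; apply: is_deriveB; exact: poly_derive.
have cth : {within `[0, 1], continuous th}.
  apply: continuous_subspaceT => x.
  apply: differentiable_continuous; apply/derivable1_diffP.
  by case: (dth x).
have [t t01 E] := MVT_segment ler01 (fun x _ => dth x) cth.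
rewrite subr0 mulr1 in E.
have E' : phi 1 - (k1 * 1 + k2 * (1 * 1)) - (phi 0 - (k1 * 0 + k2 * (0 * 0))) = dphi t - (k1 + k2 * (2 * t)) := E.
move: t01; rewrite in_itv /= => /andP[t0 t1].
have := hb t; rewrite t0 t1 => /(_ isT) H.
have E2 : phi 1 - phi 0 - (k1 + k2) = dphi t - (k1 + k2 * (2 * t)).
  by rewrite -E'; ring.
have -> : (al * S + (A + B) / (2 * al)) / 2 = k1 + k2 - c.
  rewrite /k1 /k2; field; lra.
have : dphi t - (k1 + k2 * (2 * t)) <= 0.
  have -> : k1 + k2 * (2 * t) = c + (al * S + (A + (B - A) * t) / al) / 2.
    rewrite /k1 /k2; field; lra.
  lra.
lra.
Qed.
End S1.

Section S2.
Variables (R : realType) (d : nat).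
Implicit Types (u w h x y : 'rV[R]_d) (Q : 'M[R]_d).

Lemma qE Q x : qnorm2 Q x = \sum_i \sum_k x 0 i * Q i k * x 0 k.
Proof.
rewrite /qnorm2 !mxE exchange_big /=; apply: eq_bigr => k _.
by rewrite !mxE mulr_suml.
Qed.

Lemma qconv Q u w (t : R) :
  qnorm2 Q ((1 - t) *: u + t *: w) =
  (1 - t) * qnorm2 Q u + t * qnorm2 Q w - t * (1 - t) * qnorm2 Q (u - w).
Proof.
rewrite !qE !mulr_sumr -big_split -sumrB /=; apply: eq_bigr => i _.
rewrite !mulr_sumr -big_split -sumrB /=; apply: eq_bigr => k _.
rewrite !mxE; ring.
Qed.

Lemma qconv_le Q u w (t : R) : psd Q -> 0 <= t <= 1 ->
  qnorm2 Q ((1 - t) *: u + t *: w) <= (1 - t) * qnorm2 Q u + t * qnorm2 Q w.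
Proof.
move=> [_ pQ] /andP[t0 t1]; rewrite qconv.
have := pQ (u - w); have : 0 <= t * (1 - t) by apply: mulr_ge0; lra.
nra.
Qed.

Lemma qD Q1 Q2 x : qnorm2 (Q1 + Q2) x = qnorm2 Q1 x + qnorm2 Q2 x.
Proof.
rewrite !qE -big_split /=; apply: eq_bigr => i _.
rewrite -big_split /=; apply: eq_bigr => k _; rewrite !mxE; ring.
Qed.

Lemma qsum n (F : 'I_n -> 'M[R]_d) x : qnorm2 (\sum_(j < n) F j) x = \sum_(j < n) qnorm2 (F j) x.
Proof.
elim/big_ind2: _ => //; last by move=> *; rewrite qD; congr (_ + _).
by rewrite qE big1 // => i _; rewrite big1 // => k _; rewrite mxE; ring.
Qed.

Lemma amgm u w (al : R) : 0 < al ->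
  dotv u w <= (al * sqnorm w + sqnorm u / al) / 2.
Proof.
move=> al0; rewrite /dotv /sqnorm /dotv mulr_sumr mulr_suml -big_split mulr_suml.
apply: ler_sum => i _.
have : 0 <= (al * w 0 i - u 0 i) ^+ 2 / al by apply: divr_ge0; [apply: sqr_ge0 | lra].
have -> : (al * w 0 i - u 0 i) ^+ 2 / al = al * (w 0 i * w 0 i) + u 0 i * u 0 i / al - 2 * (u 0 i * w 0 i).
  by field; lra.
rewrite /=; lra.
Qed.

Lemma sqnorm_ge0 u : 0 <= sqnorm u.
Proof. by apply: sumr_ge0 => i _; rewrite -expr2; apply: sqr_ge0. Qed.

End S2.

Section B.
Variables (R : realType) (d m : nat) (blk : 'I_d -> 'I_m).
Implicit Types (u w g h x y : 'rV[R]_d) (Q : 'M[R]_d).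

Definition rs (k : nat) h : 'rV[R]_d := \row_i (if (k <= blk i)%N then h 0 i else 0).
Definition bl (j : 'I_m) h : 'rV[R]_d := \row_i (if blk i == j then h 0 i else 0).

Lemma rs0 h : rs 0 h = h.
Proof. by apply/rowP => i; rewrite !mxE. Qed.

Lemma rsm h : rs m h = 0.
Proof. by apply/rowP => i; rewrite !mxE leqNgt ltn_ord. Qed.

Lemma rsS (j : 'I_m) h : rs j h = rs j.+1 h + bl j h.
Proof.
apply/rowP => i; rewrite !mxE.
case: (eqVneq (blk i) j) => [->|ne]; first by rewrite leqnn ltnn add0r.
rewrite addr0 ltn_neqAle.
have -> : ((j : nat) != blk i) by apply/eqP => E; move/eqP: ne; apply; apply/val_inj.
by [].
Qed.

Lemma rs_conv (j : 'I_m) h (t : R) :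
  rs j.+1 h + t *: bl j h = (1 - t) *: rs j.+1 h + t *: rs j h.
Proof. by rewrite (rsS j h); apply/rowP => i; rewrite !mxE; ring. Qed.

Lemma q_rs Q k h : qnorm2 Q (rs k h) = qnorm2 (trunc_ge blk k Q) h.
Proof.
rewrite !qE; apply: eq_bigr => i _; apply: eq_bigr => l _; rewrite !mxE.
by case: (k <= blk i)%N; case: (k <= blk l)%N; rewrite /= ?(mul0r, mulr0).
Qed.

Lemma Qt_sum (Q : 'I_m -> 'M[R]_d) h :
  qnorm2 (Qtilde blk Q) h = \sum_j (qnorm2 (Q j) (rs j h) + qnorm2 (Q j) (rs j.+1 h)).
Proof. by rewrite /Qtilde qsum; apply: eq_bigr => j _; rewrite qD !q_rs. Qed.

Lemma sum_pick i (a : R) : \sum_(j < m) (if blk i == j then a else 0) = a.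
Proof.
rewrite (bigD1 (blk i)) //= eqxx big1 ?addr0 // => j /negbTE.
by rewrite eq_sym => ->.
Qed.

Lemma dot_split g h : dotv g h = \sum_j dotv g (bl j h).
Proof.
rewrite /dotv exchange_big /=; apply: eq_bigr => i _.
rewrite -[LHS](sum_pick i); apply: eq_bigr => j _; rewrite mxE.
by case: ifP; rewrite ?mulr0.
Qed.

Lemma sq_split h : sqnorm h = \sum_j sqnorm (bl j h).
Proof.
rewrite /sqnorm /dotv exchange_big /=; apply: eq_bigr => i _.
rewrite -[LHS](sum_pick i); apply: eq_bigr => j _; rewrite mxE.
by case: ifP; rewrite ?mulr0.
Qed.

Lemma dot_bl j g h : dotv g (bl j h) = dotv (bl j g) (bl j h).
Proof. by apply: eq_bigr => i _; rewrite !mxE; case: ifP; rewrite ?mulr0. Qed.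

Lemma blocksq_bl j g : blocksq blk j g = sqnorm (bl j g).
Proof.
rewrite /blocksq /sqnorm /dotv big_mkcond /=; apply: eq_bigr => i _.
by rewrite !mxE; case: ifP; rewrite ?mulr0 // expr2.
Qed.

End B.

Lemma dotvBl (R : realType) (d : nat) (u v w : 'rV[R]_d) : dotv (u - v) w = dotv u w - dotv v w.
Proof. by rewrite /dotv -sumrB; apply: eq_bigr => i _; rewrite !mxE; ring. Qed.

Section C.
Variables (R : realType) (d m : nat) (blk : 'I_d -> 'I_m).

Lemma block_step (f : 'rV[R]_d -> R) (Q : 'I_m -> 'M[R]_d) (j : 'I_m) x h (al : R) :
  (forall z, differentiable f z) -> psd (Q j) ->
  (forall z y, blocksq blk j (grad f z - grad f y) <= qnorm2 (Q j) (z - y)) -> 0 < al ->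
  f (x + rs blk j h) - f (x + rs blk j.+1 h) - dotv (grad f x) (bl blk j h) <=
  (al * sqnorm (bl blk j h) + (qnorm2 (Q j) (rs blk j.+1 h) + qnorm2 (Q j) (rs blk j h)) / (2 * al)) / 2.
Proof.
move=> df pQ hQ al0.
set p := x + rs blk j.+1 h; set b := bl blk j h.
have := @oneD R (fun s => f (p + s *: b)) (fun t => 'D_b f (p + t *: b))
  (dotv (grad f x) b) (sqnorm b) (qnorm2 (Q j) (rs blk j.+1 h)) (qnorm2 (Q j) (rs blk j h)) al
  al0 (fun t => phi_derive p b t df).
have -> : p + 1 *: b = x + rs blk j h by rewrite scale1r /p -addrA -rsS.
rewrite scale0r addr0; apply.
move=> t t01.
rewrite Dgrad // -dotvBl dot_bl.
have H1 := amgm (bl blk j (grad f (p + t *: b) - grad f x)) b al0.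
rewrite -blocksq_bl in H1.
have H2 := hQ (p + t *: b) x.
have E : p + t *: b - x = (1 - t) *: rs blk j.+1 h + t *: rs blk j h.
  by rewrite -rs_conv /p /b; apply/rowP => i; rewrite !mxE; ring.
rewrite E in H2.
have H3 := qconv_le (rs blk j.+1 h) (rs blk j h) pQ t01.
set X := blocksq _ _ _ in H1 H2.
have H4 : X / al <= (qnorm2 (Q j) (rs blk j.+1 h) + (qnorm2 (Q j) (rs blk j h) - qnorm2 (Q j) (rs blk j.+1 h)) * t) / al.
  by apply: ler_wpM2r; [rewrite invr_ge0; lra | lra].
lra.
Qed.
End C.

Section D.
Variables (R : realType) (d m : nat) (blk : 'I_d -> 'I_m).

Lemma sum_lin (al b : R) (S T : 'I_m -> R) :
  \sum_j (al * S j + T j / b) / 2 = (al * \sum_j S j + (\sum_j T j) / b) / 2.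
Proof. by rewrite -mulr_suml big_split /= -mulr_sumr -mulr_suml. Qed.

Lemma descent (f : 'rV[R]_d -> R) (Q : 'I_m -> 'M[R]_d) (N al : R) x y :
  (forall z, differentiable f z) -> (forall j, psd (Q j)) ->
  (forall j z y, blocksq blk j (grad f z - grad f y) <= qnorm2 (Q j) (z - y)) ->
  (forall h, qnorm2 (Qtilde blk Q) h <= N * sqnorm h) -> 0 < al ->
  f y - f x - dotv (grad f x) (y - x) <= (al * sqnorm (y - x) + N * sqnorm (y - x) / (2 * al)) / 2.
Proof.
move=> df pQ hQ hN al0.
set h := y - x.
have Etel : f y - f x = \sum_(j < m) (f (x + rs blk j h) - f (x + rs blk j.+1 h)).
  have T := @telescope_sumr _ 0 m (fun k => f (x + rs blk k h)) (leq0n m).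
  rewrite big_mkord /= rs0 rsm addr0 in T.
  have Exh : x + h = y by rewrite /h addrC subrK.
  rewrite Exh in T.
  by rewrite -opprB -T -sumrN; apply: eq_bigr => j _; rewrite opprB.
rewrite Etel (dot_split blk) -sumrB.
apply: le_trans.
  apply: ler_sum => j _; exact: (block_step x h df (pQ j) (hQ j) al0).
rewrite sum_lin -sq_split.
have -> : \sum_j (qnorm2 (Q j) (rs blk j.+1 h) + qnorm2 (Q j) (rs blk j h)) = qnorm2 (Qtilde blk Q) h.
  by rewrite Qt_sum; apply: eq_bigr => j _; rewrite addrC.
have H := hN h.
have : qnorm2 (Qtilde blk Q) h / (2 * al) <= N * sqnorm h / (2 * al).
  by apply: ler_wpM2r => //; rewrite invr_ge0; lra.
lra.
Qed.
End D.

Section E.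
Variables (R : realType) (d : nat).
Implicit Types (u v w h x y z : 'rV[R]_d) (A : 'M[R]_d).

Lemma Gbound (X S c : R) : 0 <= S -> 0 <= c ->
  (forall al, 0 < al -> X <= (al * S + c ^+ 2 * S / al) / 2) -> X <= c * S.
Proof.
move=> S0 c0 H; case: (ltrP 0 c) => [cp|cn].
  have := H c cp; have -> : c ^+ 2 * S / c = c * S by field; lra.
  lra.
have c00 : c = 0 by lra.
rewrite c00 mul0r; case: (lerP X 0) => // Xp.
set a := X / (S + 1).
have a0 : 0 < a by apply: divr_gt0; lra.
have aS : a * S = X - a by rewrite /a; field; lra.
have := H a a0; rewrite c00 expr0n /= mul0r mul0r addr0 aS; lra.
Qed.

Lemma dotvC u v : dotv u v = dotv v u.
Proof. by apply: eq_bigr => i _; rewrite mulrC. Qed.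

Lemma dotvBr u v w : dotv u (v - w) = dotv u v - dotv u w.
Proof. by rewrite dotvC dotvBl !(dotvC u). Qed.

Lemma dotvZr u v (c : R) : dotv u (c *: v) = c * dotv u v.
Proof. rewrite /dotv mulr_sumr; apply: eq_bigr => i _; by rewrite !mxE mulrCA. Qed.

Lemma sqnormZ v (c : R) : sqnorm (c *: v) = c ^+ 2 * sqnorm v.
Proof. by rewrite /sqnorm dotvZr dotvC dotvZr; ring. Qed.

Lemma qdot A h : qnorm2 A h = dotv (h *m A^T) h.
Proof.
rewrite qE /dotv; apply: eq_bigr => i _.
rewrite !mxE mulr_suml; apply: eq_bigr => k _; rewrite !mxE; ring.
Qed.

Definition opset A := [set y : R | exists x : 'rV[R]_d,
         sqnorm x <= 1 /\ y = Num.sqrt (sqnorm (x *m A^T))].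

Lemma opset_ub A : has_ubound (opset A).
Proof.
set c := fun k : 'I_d => \sum_i (1 + A k i ^+ 2) / 2.
exists (Num.sqrt (\sum_k c k ^+ 2)) => y [x [x1 ->]].
rewrite ler_sqrt; last by apply: sumr_ge0 => k _; apply: sqr_ge0.
apply: ler_sum => k _.
have xi : forall i, -1 <= x 0 i <= 1.
  move=> i; have : x 0 i * x 0 i <= 1.
    apply: le_trans x1; rewrite /sqnorm /dotv (bigD1 i) //= lerDl.
    by apply: sumr_ge0 => l _; rewrite -expr2; apply: sqr_ge0.
  by move=> H; apply/andP; split; nra.
have b1 : (x *m A^T) 0 k <= c k.
  rewrite mxE; apply: ler_sum => i _; rewrite mxE.
  have /andP[xa xb] := xi i; have := sqr_ge0 (x 0 i - A k i); have := sqr_ge0 (x 0 i + A k i); rewrite !expr2; nra.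
have b2 : - c k <= (x *m A^T) 0 k.
  rewrite mxE /c -sumrN; apply: ler_sum => i _; rewrite mxE.
  have /andP[xa xb] := xi i; have := sqr_ge0 (x 0 i - A k i); have := sqr_ge0 (x 0 i + A k i); rewrite !expr2; nra.
rewrite expr2; nra.
Qed.

Lemma opnorm_ge0 A : 0 <= opnorm A.
Proof.
apply: (ub_le_sup (opset_ub A)); exists 0; split.
  by rewrite /sqnorm /dotv big1 // => i _; rewrite mxE mul0r.
by rewrite mul0mx /sqnorm /dotv big1 ?sqrtr0 // => i _; rewrite mxE mul0r.
Qed.

Lemma opnorm_bound A h : sqnorm (h *m A^T) <= opnorm A ^+ 2 * sqnorm h.
Proof.
have S0 := sqnorm_ge0 h.
case: (lerP (sqnorm h) 0) => [Sn|Sp].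
  have hz : h = 0.
    apply/rowP => i; rewrite mxE.
    have : sqnorm h = 0 by lra.
    have Hnn : forall i : 'I_d, true -> 0 <= h 0 i * h 0 i.
      by move=> l _; rewrite -expr2 sqr_ge0.
    move/(psumr_eq0P Hnn) => /(_ i isT).
    by move/eqP; rewrite mulf_eq0 orbb => /eqP.
  rewrite hz mul0mx /sqnorm /dotv big1 ?mulr0 // => i _; rewrite mxE mul0r //.
set r := Num.sqrt (sqnorm h).
have r0 : 0 < r by rewrite sqrtr_gt0.
have r2 : r ^+ 2 = sqnorm h by rewrite sqr_sqrtr.
have Hmem : opset A (Num.sqrt (sqnorm ((r^-1 *: h) *m A^T))).
  exists (r^-1 *: h); split => //; rewrite sqnormZ -r2 exprVn mulVf //.
  by rewrite expf_neq0 // gt_eqF.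
have H : Num.sqrt (sqnorm ((r^-1 *: h) *m A^T)) <= opnorm A := ub_le_sup (opset_ub A) Hmem.
rewrite -scalemxAl sqnormZ in H.
have T0 := sqnorm_ge0 (h *m A^T).
set T := sqnorm (h *m A^T) in H T0 *.
have N0 := opnorm_ge0 A.
have H1 : r^-1 ^+ 2 * T <= opnorm A ^+ 2.
  rewrite -[_ * T]sqr_sqrtr; last by apply: mulr_ge0 => //; apply: sqr_ge0.
  by apply: lerXn2r; rewrite ?nnegrE ?sqrtr_ge0.
rewrite -r2; rewrite exprVn in H1.
by rewrite -ler_pdivrMr ?exprn_gt0 // mulrC.
Qed.

Lemma qnorm_bound A h : qnorm2 A h <= opnorm A * sqnorm h.
Proof.
rewrite qdot; apply: Gbound; [exact: sqnorm_ge0 | exact: opnorm_ge0 | ].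
move=> al al0; apply: le_trans (amgm _ _ al0) _.
have H := opnorm_bound A h.
have : sqnorm (h *m A^T) / al <= opnorm A ^+ 2 * sqnorm h / al.
  by apply: ler_wpM2r => //; rewrite invr_ge0; lra.
lra.
Qed.

End E.

Section F.
Variables (R : realType) (d : nat).

Lemma convex_fo (f : 'rV[R]_d -> R) z w : convex_fun f -> differentiable f z ->
  f z + dotv (grad f z) (w - z) <= f w.
Proof.
move=> cf dfz; set v := w - z.
rewrite -Dgrad //.
suff : 'D_v f z <= f w - f z by lra.
apply: limr_le; first exact: diff_derivable.
near=> h.
have h0 : h != 0 by near: h; exact: nbhs_dnbhs_neq.
have h1 : `|h| < 1.
  near: h; apply: filterS (dnbhs_ball 0 ltr01) => y [/= + _].
  by rewrite /ball /= sub0r normrN.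
rewrite /= -[h^-1 *: _]/(h^-1 * _).
set F1 := f (h *: v + z).
case: (ltrP 0 h) => [hp|hn].
  have := cf w z h; rewrite ltW //= ltW; last by move: h1; rewrite gtr0_norm.
  have -> : h *: w + (1 - h) *: z = h *: v + z.
    by apply/rowP => i; rewrite /v !mxE; ring.
  move=> /(_ isT) H.
  rewrite mulrC ler_pdivrMr //; rewrite -/F1 in H; lra.
have hneg : h < 0 by rewrite lt_neqAle h0 hn.
have hm1 : -1 < h by move: h1; rewrite ltr0_norm // ltrNl.
set a := (1 - h)^-1.
have a0 : 0 < a by rewrite invr_gt0; lra.
have ah : a * (1 - h) = 1 by rewrite mulVf //; apply/eqP => E; lra.
have a1 : a <= 1.
  have : a * (1 - h) - a = - a * h by ring.
  rewrite ah => E; nra.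
have := cf (h *: v + z) w a; rewrite ltW //= a1.
have -> : a *: (h *: v + z) + (1 - a) *: w = z.
  apply/rowP => i; rewrite /v !mxE /a; field.
  by apply/eqP => E; lra.
move=> /(_ isT) H.
have H2 : (1 - h) * f z <= (1 - h) * (a * F1 + (1 - a) * f w).
  by apply: ler_wpM2l => //; lra.
have -> : h^-1 * (F1 - f z) = (f z - F1) / (- h) by rewrite invrN; ring.
rewrite ler_pdivrMr; last lra.
have E3 : (1 - h) * (a * F1 + (1 - a) * f w) = F1 - h * f w.
  have -> : (1 - h) * (a * F1 + (1 - a) * f w) = (a * (1 - h)) * F1 + (1 - h - a * (1 - h)) * f w by ring.
  by rewrite ah; ring.
rewrite E3 in H2; nra.
Unshelve. all: by end_near.
Qed.
End F.

Section G.
Variables (R : realType) (d m : nat) (blk : 'I_d -> 'I_m).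

Lemma alg1 (N S al : R) : al != 0 -> N * S / (2 * al) = N / 2 * S / al.
Proof. by move=> ?; field. Qed.

Lemma alg2 (S L : R) : 0 < L -> S = 2 * L * (L^-1 * S - L / 2 * L^-1 ^+ 2 * S).
Proof. by move=> L0; field; rewrite gt_eqF. Qed.

Lemma jensen n (a : 'I_n -> R) : (0 < n)%N ->
  (n%:R^-1 * \sum_t a t) ^+ 2 <= n%:R^-1 * \sum_t a t ^+ 2.
Proof.
move=> n0.
have N0 : 0 < n%:R :> R by rewrite ltr0n.
set mu := n%:R^-1 * \sum_t a t.
have SA : \sum_t a t = mu * n%:R by rewrite /mu mulrC mulrA mulfV ?mul1r // gt_eqF.
have H : 0 <= \sum_t (a t - mu) ^+ 2 by apply: sumr_ge0 => t _; apply: sqr_ge0.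
have E : \sum_t (a t - mu) ^+ 2 = \sum_t a t ^+ 2 - 2 * mu * \sum_t a t + mu ^+ 2 * n%:R.
  rewrite (eq_bigr (fun t => a t ^+ 2 + ((- (2 * mu)) * a t + mu ^+ 2))); last by move=> t _; ring.
  rewrite big_split big_split /= -mulr_sumr sumr_const card_ord -mulr_natr; ring.
rewrite E SA in H.
rewrite mulrC ler_pdivlMr //.
nra.
Qed.

Lemma blocksq_jensen n (u : 'I_n -> 'rV[R]_d) (j : 'I_m) : (0 < n)%N ->
  blocksq blk j (n%:R^-1 *: \sum_t u t) <= n%:R^-1 * \sum_t blocksq blk j (u t).
Proof.
move=> n0; rewrite /blocksq exchange_big /= mulr_sumr; apply: ler_sum => i _.
rewrite !mxE summxE; exact: jensen.
Qed.

End G.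

Unset Implicit Arguments.
Local Close Scope classical_set_scope.

Theorem lemma4 (R : realType) (d m n : nat) (blk : 'I_d -> 'I_m)
  (F : 'I_n -> 'rV[R]_d -> R) (Q : 'I_m -> 'M[R]_d) :
  (0 < n)%N ->
  consecutive_blocks blk ->
  (forall t, convex_fun (F t)) ->
  (forall t, C1 (F t)) ->
  (forall j, psd (Q j)) ->
  (forall t j x y,
     blocksq blk j (grad (F t) x - grad (F t) y) <= qnorm2 (Q j) (x - y)) ->
  let f := fun x => n%:R^-1 * \sum_(t < n) F t x in
  let L := Num.sqrt (2 * opnorm (Qtilde blk Q)) in
  (forall j x y,
     blocksq blk j (grad f x - grad f y) <= qnorm2 (Q j) (x - y)) /\
  (forall x y,
     f y - f x <= dotv (grad f x) (y - x) + L / 2 * sqnorm (y - x)) /\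
  (forall x y,
     sqnorm (grad f y - grad f x)
       <= 2 * L * (f y - f x - dotv (grad f x) (y - x))).
Proof.
move=> n0 _ cvx C1F psdQ hyp f L.
have dF : forall t x, differentiable (F t) x by move=> t; case: (C1F t).
have fE : f = n%:R^-1 \*: (\sum_(t < n) F t).
  by apply/funext => y; rewrite /f /= fct_sumE.
have df : forall x, differentiable f x.
  move=> x; rewrite fE; apply: differentiableZ; apply: differentiable_sum => t.
  exact: dF.
have gE : forall x, grad f x = n%:R^-1 *: \sum_t grad (F t) x.
  move=> x; apply/rowP => i; rewrite !mxE fE deriveZ; last first.
    by apply: derivable_sum => t; exact: diff_derivable.
  rewrite derive_sum; last by move=> t; exact: diff_derivable.
  rewrite summxE; congr (_ * _); apply: eq_bigr => t _; by rewrite mxE.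
have P1 : forall j x y, blocksq blk j (grad f x - grad f y) <= qnorm2 (Q j) (x - y).
  move=> j x y; rewrite !gE -scalerBr -sumrB.
  apply: le_trans (@blocksq_jensen R d m blk n (fun t => grad (F t) x - grad (F t) y) j n0) _.
  have Np : 0 < n%:R :> R by rewrite ltr0n.
  have : \sum_t blocksq blk j (grad (F t) x - grad (F t) y) <= \sum_(t < n) qnorm2 (Q j) (x - y).
    by apply: ler_sum => t _; exact: hyp.
  rewrite sumr_const card_ord -mulr_natr => H.
  rewrite mulrC ler_pdivrMr ?mul1r; first by rewrite mulr_natr; exact: H.
  by [].
have N0 := opnorm_ge0 (Qtilde blk Q).
set N := opnorm (Qtilde blk Q).
have hN : forall h, qnorm2 (Qtilde blk Q) h <= N * sqnorm h by move=> h; exact: qnorm_bound.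
have L0 : 0 <= L by exact: sqrtr_ge0.
have L2 : (L / 2) ^+ 2 = N / 2.
  rewrite expr_div_n sqr_sqrtr; last lra.
  by rewrite /N; field.
have desc : forall x y, f y - f x - dotv (grad f x) (y - x) <= L / 2 * sqnorm (y - x).
  move=> x y; apply: Gbound; [exact: sqnorm_ge0 | lra | ] => al al0.
  have := descent x y df psdQ P1 hN al0.
  have -> : N * sqnorm (y - x) / (2 * al) = (L / 2) ^+ 2 * sqnorm (y - x) / al :> R.
    by rewrite L2 alg1 // gt_eqF.
  by [].
have cvf : convex_fun f.
  move=> x y a a01; rewrite /f.
  have : \sum_(t < n) F t (a *: x + (1 - a) *: y) <= \sum_(t < n) (a * F t x + (1 - a) * F t y).
    by apply: ler_sum => t _; exact: cvx.
  rewrite big_split /= -!mulr_sumr => H.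
  have Ninv : 0 <= n%:R^-1 :> R by rewrite invr_ge0 ler0n.
  apply: le_trans (ler_wpM2l Ninv H) _.
  by rewrite le_eqVlt; apply/orP; left; apply/eqP; ring.
split; first exact: P1.
split.
  by move=> x y; have := desc x y; lra.
move=> x y.
set g' := grad f y - grad f x.
set D := f y - f x - dotv (grad f x) (y - x).
have key : forall s, 0 < s -> s * sqnorm g' - L / 2 * s ^+ 2 * sqnorm g' <= D.
  move=> s s0; set w := y - s *: g'.
  have H1 := convex_fo w cvf (df x).
  have H2 := desc y w.
  have E1 : w - y = (- s) *: g' by rewrite /w; apply/rowP => i; rewrite !mxE; ring.
  have E2 : w - x = (y - x) - s *: g' by rewrite /w; apply/rowP => i; rewrite !mxE; ring.
  rewrite E1 sqnormZ dotvZr sqrrN in H2.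
  rewrite E2 dotvBr dotvZr in H1.
  have E3 : dotv (grad f y) g' - dotv (grad f x) g' = sqnorm g' by rewrite -dotvBl.
  rewrite /D; nra.
have S0 := sqnorm_ge0 g'.
case: (ltrP 0 L) => [Lp|Ln].
  have := key L^-1; rewrite invr_gt0 Lp => /(_ isT) H.
  rewrite {1}(alg2 (sqnorm g') Lp).
  by apply: ler_wpM2l => //; lra.
have EL : L = 0 by lra.
rewrite EL mulr0 mul0r.
case: (lerP (sqnorm g') 0) => // Sp.
set s := (`|D| + 1) / sqnorm g'.
have s0 : 0 < s by apply: divr_gt0 => //; have := normr_ge0 D; lra.
have K := key _ s0.
have Z : L / 2 * s ^+ 2 * sqnorm g' = 0 by rewrite EL !mul0r.
have Z2 : s * sqnorm g' = `|D| + 1 by rewrite /s divfK // gt_eqF.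
have := ler_norm D; lra.
Qed.
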